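(* Let $\Phi:\{0,1\}^n\to\{0,1\}^n$ and $\mu\in\{0,1\}^n$. Then $\overline{W}(\mu)\neq\emptyset$ if and only if $\Phi(\mu)=\mu$; similarly, $\underline{W}(\mu)\neq\emptyset$ if and only if $\Phi(\mu)=\mu$.
   Context: Let $\mathbf{B}=\{0,1\}$ (discrete topology), $n\ge 1$, and $\Phi:\mathbf{B}^n\to\mathbf{B}^n$ a function. For $\nu\in\mathbf{B}^n$ define $\Phi^\nu:\mathbf{B}^n\to\mathbf{B}^n$ coordinatewise by $\Phi^\nu_i(\mu)=\mu_i$ if $\nu_i=0$ and $\Phi^\nu_i(\mu)=\Phi_i(\mu)$ if $\nu_i=1$. For $\alpha^0,\dots,\alpha^k\in\mathbf{B}^n$ put $\Phi^{\alpha^0\dots\alpha^k}=\Phi^{\alpha^k}\circ\cdots\circ\Phi^{\alpha^0}$. A sequence $\alpha=(\alpha^k)_{k\in\mathbf{N}}$ in $\mathbf{B}^n$ is progressive if for every $i\in\{1,\dots,n\}$ the set $\{k:\alpha^k_i=1\}$ is infinite. $Seq$ denotes the set of strictly increasing real sequences $t_0<t_1<\cdots$ unbounded above. $P_n$ is the set of functions $\rho:\mathbf{R}\to\mathbf{B}^n$ of the form $\rho(t_k)=\alpha^k$ for all $k$ and $\rho(t)=0$ for $t\notin\{t_k\}$, where $\alpha$ is progressive and $(t_k)\in Seq$. For such $\rho$ and $\mu\in\mathbf{B}^n$, the orbit is $\Phi^\rho(\mu,t)=\mu$ for $t<t_0$ and $\Phi^\rho(\mu,t)=\Phi^{\alpha^0\dots\alpha^k}(\mu)$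 for $t\in[t_k,t_{k+1})$. The $\omega$-limit set is $\omega_\rho(\mu)=\{\mu'\in\mathbf{B}^n:\exists (s_k)\in Seq$ such that $\Phi^\rho(\mu,s_k)=\mu'$ for all sufficiently large $k\}$. For $\mu\in\mathbf{B}^n$: $\overline{W}(\mu)=\{\mu'\in\mathbf{B}^n:\exists\rho'\in P_n,\ \omega_{\rho'}(\mu')\subset\{\mu\}\}$ and $\underline{W}(\mu)=\{\mu'\in\mathbf{B}^n:\forall\rho'\in P_n,\ \omega_{\rho'}(\mu')\subset\{\mu\}\}$. *)

(* Defs.v *)
From mathcomp Require Import all_boot.
From Stdlib Require Import Reals.

Set Implicit Arguments.
Unset Strict Implicit.
Unset Printing Implicit Defensive.

Definition Bn (n : nat) := {ffun 'I_n -> bool}.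

Definition zeroB (n : nat) : Bn n := [ffun _ => false].

Definition Phinu (n : nat) (Phi : Bn n -> Bn n) (nu : Bn n) (mu : Bn n) : Bn n :=
  [ffun i => if nu i then Phi mu i else mu i].

(* Phi^{alpha^0 ... alpha^k} (mu) = Phi^{alpha^k} o ... o Phi^{alpha^0} (mu) *)
Fixpoint Phiseq (n : nat) (Phi : Bn n -> Bn n) (alpha : nat -> Bn n) (k : nat)
  (mu : Bn n) : Bn n :=
  match k with
  | 0 => Phinu Phi (alpha 0) mu
  | S k' => Phinu Phi (alpha (S k')) (Phiseq Phi alpha k' mu)
  end.

Definition progressive (n : nat) (alpha : nat -> Bn n) : Prop :=
  forall i : 'I_n, forall N : nat, exists k : nat, (N <= k)%coq_nat /\ alpha k i = true.

Definition Seq (t : nat -> R) : Prop :=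
  (forall k, (t k < t (S k))%R) /\ (forall M : R, exists k, (M < t k)%R).

Definition represents (n : nat) (rho : R -> Bn n) (alpha : nat -> Bn n) (t : nat -> R) : Prop :=
  progressive alpha /\ Seq t /\
  (forall k, rho (t k) = alpha k) /\
  (forall s : R, (forall k, s <> t k) -> rho s = zeroB n).

Definition Pn (n : nat) (rho : R -> Bn n) : Prop :=
  exists alpha t, represents rho alpha t.

(* the orbit Phi^rho(mu, s) = v, computed from a representation (alpha, t) of rho *)
Definition orbit_is (n : nat) (Phi : Bn n -> Bn n) (alpha : nat -> Bn n) (t : nat -> R)
  (mu : Bn n) (s : R) (v : Bn n) : Prop :=
  ((s < t 0%nat)%R /\ v = mu) \/
  (exists k, (t k <= s)%R /\ (s < t (S k))%R /\ v = Phiseq Phi alpha k mu).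

Definition in_omega (n : nat) (Phi : Bn n -> Bn n) (rho : R -> Bn n) (mu mu' : Bn n) : Prop :=
  exists alpha t, represents rho alpha t /\
    exists s : nat -> R, Seq s /\
      exists N, forall k, (N <= k)%coq_nat -> orbit_is Phi alpha t mu (s k) mu'.

Definition omega_sub1 (n : nat) (Phi : Bn n -> Bn n) (rho : R -> Bn n) (mu mu0 : Bn n) : Prop :=
  forall mu', in_omega Phi rho mu mu' -> mu' = mu0.

Definition Wover (n : nat) (Phi : Bn n -> Bn n) (mu : Bn n) (mu' : Bn n) : Prop :=
  exists rho, Pn rho /\ omega_sub1 Phi rho mu' mu.

Definition Wunder (n : nat) (Phi : Bn n -> Bn n) (mu : Bn n) (mu' : Bn n) : Prop :=
  forall rho, Pn rho -> omega_sub1 Phi rho mu' mu.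

(* Main.v *)
From Stdlib Require Import Reals Lra Lia Classical ClassicalEpsilon.
Require Import Defs.
From mathcomp Require Import all_boot.
From mathcomp Require Import zify.
From Stdlib Require Import Reals.

Lemma common_bound {T : eqType} {f : nat -> T} {P : nat -> Prop} {l : seq T} :
  (forall v, v \in l -> exists N, forall k, (N <= k)%coq_nat -> P k -> f k <> v) ->
  exists N, forall k, (N <= k)%coq_nat -> P k -> f k \notin l.
Proof.
elim: l => [|a l IH] H; first by exists 0%nat.
have [N1 H1] := H a (mem_head a l).
have [N2 H2] : exists N, forall k, (N <= k)%coq_nat -> P k -> f k \notin l.
  by apply: IH => v vl; apply: H; rewrite in_cons vl orbT.
exists (N1 + N2)%nat => k Hk Pk; rewrite in_cons negb_or; apply/andP; split.
- apply/eqP; apply: H1 => //; lia.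
- apply: H2 => //; lia.
Qed.

Lemma inf_pigeon (T : finType) (f : nat -> T) (P : nat -> Prop) :
  (forall N, exists k, (N <= k)%coq_nat /\ P k) ->
  exists v, forall N, exists k, (N <= k)%coq_nat /\ P k /\ f k = v.
Proof.
move=> Hinf; apply: NNPP => Hn.
have Hb : forall v, v \in enum T -> exists N, forall k, (N <= k)%coq_nat -> P k -> f k <> v.
  move=> v _; apply: NNPP => Hv; apply: Hn; exists v => N.
  apply: NNPP => HN; apply: Hv; exists N => k Hk Pk Hf; apply: HN; exists k; auto.
have [N HN] := common_bound Hb.
have [k [Hk Pk]] := Hinf N.
by move: (HN k Hk Pk); rewrite mem_enum.
Qed.

Lemma t_mono (t : nat -> R) : (forall k, (t k < t (S k))%R) ->
  forall a b, (a <= b)%coq_nat -> (t a <= t b)%R.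
Proof.
move=> Ht a b Hab; induction Hab; first lra.
have := Ht m; lra.
Qed.

Lemma inf_omega n (Phi : Bn n -> Bn n) rho alpha t (mu' v : Bn n) :
  represents rho alpha t ->
  (forall N, exists k, (N <= k)%coq_nat /\ Phiseq Phi alpha k mu' = v) ->
  in_omega Phi rho mu' v.
Proof.
move=> Hr Hinf.
have [h Hh] : exists h : nat -> nat, forall N, (N <= h N)%coq_nat /\ Phiseq Phi alpha (h N) mu' = v.
  exists (fun N => proj1_sig (constructive_indefinite_description _ (Hinf N))).
  move=> N; exact: (proj2_sig (constructive_indefinite_description _ (Hinf N))).
pose g := fix g j := match j with 0 => h 0%nat | S j' => h (S (g j')) end.
have gS : forall j, (g j < g (S j))%coq_nat by move=> j; have := (Hh (S (g j))).1; simpl; lia.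
have gge : forall j, (j <= g j)%coq_nat.
  elim=> [|j IH]; first lia. have := gS j; lia.
have gv : forall j, Phiseq Phi alpha (g j) mu' = v by case=> [|j]; apply: (Hh _).2.
case: Hr => Hp [[Ht Hu] [Hrt Hrz]].
exists alpha, t; split; first by [].
exists (fun j => t (g j)); split; first split.
- move=> k; have := t_mono _ Ht _ _ (gS k); have := Ht (g k); lra.
- move=> M; have [k Hk] := Hu M; exists k; have := t_mono _ Ht _ _ (gge k); lra.
- exists 0%nat => k _; right; exists (g k); split; first lra.
  split; first exact: Ht. by rewrite gv.
Qed.

Lemma Wover_fixed n (Phi : Bn n -> Bn n) (mu mu' : Bn n) :
  Wover Phi mu mu' -> Phi mu = mu.
Proof.
case=> rho [[alpha [t Hr]] Hom].
have Hev : exists K, forall k, (K <= k)%coq_nat -> Phiseq Phi alpha k mu' = mu.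
  apply: NNPP => Hn.
  have Hinf : forall N, exists k, (N <= k)%coq_nat /\ Phiseq Phi alpha k mu' <> mu.
    move=> N; apply: NNPP => HN; apply: Hn; exists N => k Hk.
    apply: NNPP => Hk'; apply: HN; exists k; auto.
  have [v Hv] := @inf_pigeon _ (fun k => Phiseq Phi alpha k mu') _ Hinf.
  have Hvv : v = mu.
    apply: Hom; apply: (@inf_omega n Phi rho alpha t mu' v Hr) => N.
    have [k [? [_ ?]]] := Hv N; exists k; auto.
  have [k [_ [Hk1 Hk2]]] := Hv 0%nat. by apply: Hk1; rewrite Hk2.
case: Hev => K HK.
case: Hr => Hp _.
apply/ffunP => i.
have [k [Hk Hai]] := Hp i (S K).
destruct k as [|k]; first lia.
have E1 := HK (S k) ltac:(lia).
have E2 := HK k ltac:(lia).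
simpl in E1; rewrite E2 in E1.
have := congr1 (fun f : Bn n => f i) E1; rewrite /Phinu ffunE Hai /=; auto.
Qed.

Definition allT n : Bn n := [ffun _ => true].

Definition rho0 n : R -> Bn n := fun s =>
  if excluded_middle_informative (exists k, s = INR k) then allT n else zeroB n.

Lemma rho0_P n : represents (@rho0 n) (fun _ => allT n) INR.
Proof.
split; [|split; [|split]].
- move=> i N; exists N; split; [lia | by rewrite ffunE].
- split; first (move=> k; rewrite S_INR; lra).
  move=> M; have [k Hk] := INR_archimed 1 M ltac:(lra); exists k; lra.
- move=> k; rewrite /rho0; case: excluded_middle_informative => // H.
  by exfalso; apply: H; exists k.
- move=> s Hs; rewrite /rho0; case: excluded_middle_informative => // [[k Hk]].
  by exfalso; apply: (Hs k).
Qed.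

Lemma Phiseq_fixed n (Phi : Bn n -> Bn n) alpha mu k :
  Phi mu = mu -> Phiseq Phi alpha k mu = mu.
Proof.
move=> Hf.
have HP : forall nu, Phinu Phi nu mu = mu.
  by move=> nu; apply/ffunP => i; rewrite /Phinu ffunE Hf; case: (nu i).
by elim: k => [|k IH] /=; rewrite ?IH HP.
Qed.

Lemma Wunder_fixed n (Phi : Bn n -> Bn n) mu : Phi mu = mu -> Wunder Phi mu mu.
Proof.
move=> Hf rho _ mu'' [alpha [t [_ [s [_ [N HN]]]]]].
case: (HN N (le_n N)) => [[_ ->] // | [k [_ [_ ->]]]].
exact: Phiseq_fixed.
Qed.

Theorem theorem40 (n : nat) (hn : (1 <= n)%coq_nat) (Phi : Bn n -> Bn n) (mu : Bn n) :
  ((exists mu', Wover Phi mu mu') <-> Phi mu = mu) /\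
  ((exists mu', Wunder Phi mu mu') <-> Phi mu = mu).
Proof.
have HP : Pn (@rho0 n) by exists (fun _ => allT n), INR; exact: rho0_P.
split; split.
- by case=> mu' H; exact: (@Wover_fixed n Phi mu mu' H).
- move=> Hf; exists mu, (@rho0 n); split => //; exact: (@Wunder_fixed n Phi mu Hf).
- case=> mu' H; apply: (@Wover_fixed n Phi mu mu'); exists (@rho0 n); split => //.
  exact: H.
- move=> Hf; exists mu; exact: (@Wunder_fixed n Phi mu Hf).
Qed.
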